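(* Let $\mathcal{Q}$ be a set of queries and $\mathcal{R}$ a set of rule sets, equipped with a semantic distance $d_{\text{sem}}$ (on $\mathcal{Q}$ and on $\mathcal{R}$) satisfying the axioms of a metric. Let $E$ be an encoder mapping queries and rule sets to vectors in a Euclidean space, and suppose there is a constant $C>0$ such that $d_{\text{sem}}(A,B)\le C\,\|E(A)-E(B)\|$ for all queries $A,B$ and for all rule sets $A,B$. Let $\Psi:\mathcal{Q}\to\mathcal{R}$ be $L_\Psi$-Lipschitz with respect to $d_{\text{sem}}$, i.e. $d_{\text{sem}}(\Psi(q),\Psi(q'))\le L_\Psi\, d_{\text{sem}}(q,q')$ for some $L_\Psi\ge 0$, and set $\text{Dist}=d_{\text{sem}}$ on $\mathcal{R}$. Let $\mathcal{C}_k$ be a finite set of samples $i$, each consisting of a query $q_i\in\mathcal{Q}$ and a rule set $\mathcal{R}_i\in\mathcal{R}$, with $\mathcal{R}_i^{LLM}=\Psi(q_i)$ and cognitive gap $g_i=\text{Dist}(\mathcal{R}_i^{LLM},\mathcal{R}_i)$. Suppose the cluster has diameter $\epsilon>0$ in the concatenated embedding space, i.e. $\|(E(q_i)\oplus E(\mathcal{R}_i))-(E(q_j)\oplus E(\mathcal{R}_j))\|<\epsilon$ for all $i,j\in\mathcal{C}_k$. Then the intra-cluster variance of the cognitive gap satisfies $$\text{Var}(g_i)<[C\cdot(1+L_\Psi)\cdot\epsilon]^2.$$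
   Context: $\oplus$ denotes vector concatenation and $\|\cdot\|$ the Euclidean norm. $\Psi$ models the LLM's rule-generation function, which, given a query, produces a predicted rule set. $\text{Var}(g_i)$ denotes the variance of the values $g_i$ over the samples $i\in\mathcal{C}_k$ (uniform empirical distribution on the cluster). *)

(* Defs.v *)
From HB Require Import structures.
From mathcomp Require Import all_boot all_order all_algebra.
Set Implicit Arguments. Unset Strict Implicit. Unset Printing Implicit Defensive.
Import Order.TTheory GRing.Theory Num.Theory.
Local Open Scope ring_scope.

Definition is_metric (R : realDomainType) (T : Type) (d : T -> T -> R) : Prop :=
  [/\ (forall x y, 0 <= d x y),
      (forall x y, d x y = 0 <-> x = y),
      (forall x y, d x y = d y x)
    & (forall x y z, d x z <= d x y + d y z)].

Definition enorm (R : rcfType) (n : nat) (v : 'rV[R]_n) : R :=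
  Num.sqrt (\sum_(i < n) v 0 i ^+ 2).

Definition vconcat (R : rcfType) (n m : nat) (u : 'rV[R]_n) (v : 'rV[R]_m)
  : 'rV[R]_(n + m) := row_mx u v.

Definition emean (R : realFieldType) (I : finType) (g : I -> R) : R :=
  (\sum_(i : I) g i) / #|I|%:R.

Definition evar (R : realFieldType) (I : finType) (g : I -> R) : R :=
  (\sum_(i : I) (g i - emean g) ^+ 2) / #|I|%:R.

(* Main.v *)
Require Import Defs.
From HB Require Import structures.
From mathcomp Require Import all_boot all_order all_algebra.
From mathcomp Require Import lra.
Import Order.TTheory GRing.Theory Num.Theory.
Local Open Scope ring_scope.

Lemma enorm_l (R : rcfType) n m (u : 'rV[R]_n) (v : 'rV[R]_m) :
  enorm u <= enorm (row_mx u v).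
Proof.
rewrite /enorm ler_sqrt; last by apply: sumr_ge0 => i _; exact: sqr_ge0.
rewrite big_split_ord /=.
under [X in _ <= X + _]eq_bigr => i _ do rewrite row_mxEl.
rewrite lerDl; apply: sumr_ge0 => i _; exact: sqr_ge0.
Qed.

Lemma enorm_r (R : rcfType) n m (u : 'rV[R]_n) (v : 'rV[R]_m) :
  enorm v <= enorm (row_mx u v).
Proof.
rewrite /enorm ler_sqrt; last by apply: sumr_ge0 => i _; exact: sqr_ge0.
rewrite big_split_ord /=.
under [X in _ <= _ + X]eq_bigr => i _ do rewrite row_mxEr.
rewrite lerDr; apply: sumr_ge0 => i _; exact: sqr_ge0.
Qed.

Lemma sum_cst (R : numDomainType) (I : finType) (x : R) : \sum_(i : I) x = x * #|I|%:R.
Proof. by rewrite sumr_const mulr_natr. Qed.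

Theorem theorem2
  (R : rcfType) (Q RS : Type) (n : nat)
  (dQ : Q -> Q -> R) (dR : RS -> RS -> R)
  (hdQ : is_metric dQ) (hdR : is_metric dR)
  (EQ : Q -> 'rV[R]_n) (ER : RS -> 'rV[R]_n)
  (C : R) (hC : 0 < C)
  (hEQ : forall a b : Q, dQ a b <= C * enorm (EQ a - EQ b))
  (hER : forall a b : RS, dR a b <= C * enorm (ER a - ER b))
  (Psi : Q -> RS) (LPsi : R) (hL : 0 <= LPsi)
  (hPsi : forall q q' : Q, dR (Psi q) (Psi q') <= LPsi * dQ q q')
  (I : finType) (hI : (0 < #|I|)%N)
  (q : I -> Q) (r : I -> RS)
  (eps : R) (heps : 0 < eps)
  (hdiam : forall i j : I,
     enorm (vconcat (EQ (q i)) (ER (r i)) - vconcat (EQ (q j)) (ER (r j))) < eps) :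
  let g := fun i : I => dR (Psi (q i)) (r i) in
  evar g < (C * (1 + LPsi) * eps) ^+ 2.
Proof.
cbv zeta; set g := fun i : I => dR (Psi (q i)) (r i).
case: hdR => _ _ dsym dtri.
set K := C * (1 + LPsi) * eps.
have gap : forall i j, g i - g j < K.
  move=> i j.
  have := hdiam i j; rewrite /vconcat opp_row_mx add_row_mx => hd.
  have ha := le_lt_trans (@enorm_l _ _ _ (EQ (q i) - EQ (q j)) (ER (r i) - ER (r j))) hd.
  have hb := le_lt_trans (@enorm_r _ _ _ (EQ (q i) - EQ (q j)) (ER (r i) - ER (r j))) hd.
  set a := enorm _ in ha; set b := enorm _ in hb.
  have h1 := dtri (Psi (q i)) (Psi (q j)) (r i).
  have h2 := dtri (Psi (q j)) (r j) (r i).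
  have h3 := hPsi (q i) (q j).
  have h4 := hEQ (q i) (q j).
  have h5 := hER (r j) (r i).
  have h6 : enorm (ER (r j) - ER (r i)) = b.
    by rewrite /b /enorm; congr Num.sqrt; apply: eq_bigr => k _;
       rewrite !mxE sqrrB; rewrite [in RHS]sqrrB; lra.
  rewrite h6 in h5. rewrite -/a in h4.
  have h7 : LPsi * dQ (q i) (q j) <= LPsi * (C * eps).
    apply: ler_wpM2l => //; apply: (le_trans h4); apply: ler_wpM2l; [exact: ltW | exact: ltW].
  have h8 : C * b < C * eps by rewrite ltr_pM2l.
  rewrite /g /K; nra.
pose N := #|I|%:R : R.
have hN : 0 < N by rewrite /N ltr0n.
have dev : forall i, (g i - emean g) ^+ 2 < K ^+ 2.
  move=> i.
  have m1 : emean g < g i + K.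
    rewrite /emean ltr_pdivrMr // -/N /N -sum_cst.
    apply: ltr_sum; first by case/card_gt0P: hI => x _; apply/hasP; exists x; rewrite ?mem_index_enum.
    move=> j _; have := gap j i; lra.
  have m2 : g i - K < emean g.
    rewrite /emean ltr_pdivlMr // -/N /N -sum_cst.
    apply: ltr_sum; first by case/card_gt0P: hI => x _; apply/hasP; exists x; rewrite ?mem_index_enum.
    move=> j _; have := gap i j; lra.
  nra.
rewrite /evar ltr_pdivrMr // -sum_cst.
apply: ltr_sum; first by case/card_gt0P: hI => x _; apply/hasP; exists x; rewrite ?mem_index_enum.
by move=> i _; exact: dev.
Qed.
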